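(* Let $k$ be an algebraically closed field of characteristic zero and $0<l<n$. Let $Y,Z\subset\mathbb P^n$ be closed subvarieties with saturated homogeneous ideals $I_Y,I_Z\subset k[x_0,\dots,x_n]$, $I_X=I_Y\cap I_Z$, with $Y\subset\{x_0=\cdots=x_{l-1}=0\}$, $Z\subset\{x_{l+1}=\cdots=x_n=0\}$ and $Y\cap Z\neq\emptyset$ (so $Y\cap Z=\{p\}$, $p$ the coordinate point of $x_l$). Fix a monomial order $\prec$ and a positive integer $m$, and let $\Sigma_{X,m}$ be the set of degree-$m$ monomials of $k[x_0,\dots,x_n]$ not in $\mathrm{in}_\prec(I_X)$, $\Sigma_{Y,m}$ the set of degree-$m$ monomials of $k[x_l,\dots,x_n]$ not in $\mathrm{in}_\prec(I_Y\cap k[x_l,\dots,x_n])$, and $\Sigma_{Z,m}$ the set of degree-$m$ monomials of $k[x_0,\dots,x_l]$ not in $\mathrm{in}_\prec(I_Z\cap k[x_0,\dots,x_l])$ (initial ideals of the intersections computed in the respective subrings). Then $\Sigma_{X,m}=\Sigma_{Y,m}\cup\Sigma_{Z,m}$ and $\Sigma_{Y,m}\cap\Sigma_{Z,m}=\{x_l^m\}$. *)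

(* Defs.v *)
From HB Require Import structures.
From mathcomp Require Import all_boot all_order all_algebra.
From mathcomp.multinomials Require Import mpoly.
Set Implicit Arguments. Unset Strict Implicit. Unset Printing Implicit Defensive.
Import Order.TTheory GRing.Theory.
Local Open Scope ring_scope.

(* Polynomial ring k[x_0,...,x_n] is {mpoly k[n.+1]}; variable x_i is 'X_i,
   i : 'I_n.+1; monomials x^a are 'X_[a] with exponent vectors a : 'X_{1..n.+1}. *)

Section Defs.
Variables (k : fieldType) (N : nat).
Local Notation R := {mpoly k[N]}.
Local Notation mon := 'X_{1..N}.

(* Monomial order: strict total order on monomials, multiplicative,
   with 1 the smallest monomial (hence a well-order). *)
Definition monomial_order (lt : rel mon) : Prop :=
  [/\ (forall a, ~~ lt a a),
      (forall a b c, lt a b -> lt b c -> lt a c),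
      (forall a b, a != b -> lt a b || lt b a),
      (forall a b c, lt a b -> lt (a + c)%MM (b + c)%MM)
    & (forall a, a != 0%MM -> lt 0%MM a)].

Definition is_lead (lt : rel mon) (f : R) (a : mon) : Prop :=
  a \in msupp f /\ forall b, b \in msupp f -> b != a -> lt b a.

Definition gen_ideal_in (C : R -> Prop) (S : R -> Prop) (f : R) : Prop :=
  exists gs : seq (R * R),
    (forall gs_i, gs_i \in gs -> C gs_i.1 /\ S gs_i.2) /\
    f = \sum_(gs_i <- gs) gs_i.1 * gs_i.2.

Definition initial_ideal_in (lt : rel mon) (C : R -> Prop) (J : R -> Prop) : R -> Prop :=
  gen_ideal_in C (fun g => exists f a, [/\ J f, f != 0, is_lead lt f a & g = 'X_[a]]).

Definition hcomp (d : nat) (f : R) : R :=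
  \sum_(m <- msupp f | mdeg m == d) f@_m *: 'X_[m].

(* Points of P^{N-1}: nonzero vectors of k^N (up to scaling).
   A closed subset of projective space: common zero locus of a set of
   homogeneous polynomials. *)
Definition proj_zero_locus (S : R -> Prop) (v : 'I_N -> k) : Prop :=
  (exists i, v i != 0) /\ forall f, S f -> f.@[v] = 0.

Definition proj_closed (Y : ('I_N -> k) -> Prop) : Prop :=
  exists S : R -> Prop, (forall f, S f -> exists d, f \is d.-homog) /\
    forall v, Y v <-> proj_zero_locus S v.

(* the (saturated, homogeneous) ideal of a subset Y of projective space:
   polynomials all of whose homogeneous components vanish on Y *)
Definition ideal_of (Y : ('I_N -> k) -> Prop) (f : R) : Prop :=
  forall d v, Y v -> (hcomp d f).@[v] = 0.

Definition in_vars (P : 'I_N -> bool) (f : R) : Prop :=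
  forall a, a \in msupp f -> forall i, ~~ P i -> a i = 0%N.

Definition Sigma (lt : rel mon) (P : 'I_N -> bool) (I : R -> Prop) (m : nat) (a : mon) : Prop :=
  [/\ mdeg a = m, (forall i, ~~ P i -> a i = 0%N) &
      ~ initial_ideal_in lt (in_vars P) (fun f => I f /\ in_vars P f) 'X_[a]].

End Defs.

(* Main.v *)
Require Import Defs.
From HB Require Import structures.
From mathcomp Require Import all_boot all_order all_algebra.
From mathcomp.multinomials Require Import mpoly.
From Stdlib Require Import Classical.
Import GRing.Theory.
Local Open Scope ring_scope.

Set Implicit Arguments. Unset Strict Implicit. Unset Printing Implicit Defensive.

Section Aux.
Variables (k : fieldType) (N : nat).
Local Notation R := {mpoly k[N]}.
Local Notation mon := 'X_{1..N}.

Definition restr (Q : pred mon) (f : R) : R :=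
  \sum_(c <- msupp f | Q c) f@_c *: 'X_[c].

Lemma hcompE d (f : R) : hcomp d f = restr (fun c => mdeg c == d) f.
Proof. by []. Qed.

Lemma sum_pick (s : seq mon) (Q : pred mon) (F : mon -> k) e :
  uniq s ->
  \sum_(c <- s | Q c) (if c == e then F c else 0) =
  if (e \in s) && Q e then F e else 0.
Proof.
elim: s => [|x s IH] /=; first by rewrite big_nil.
case/andP => hx hu; rewrite big_cons IH // inE.
case: (eqVneq x e) => [<-|ne] /=.
  by rewrite (negbTE hx) /=; case: (Q x); rewrite ?addr0.
by case: (Q x) => //; rewrite add0r.
Qed.

Lemma mcoeff_restr Q (f : R) e : (restr Q f)@_e = if Q e then f@_e else 0.
Proof.
rewrite /restr raddf_sum /=.
transitivity (\sum_(c <- msupp f | Q c) (if c == e then f@_c else 0)).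
  by apply: eq_bigr => c _; rewrite mcoeffZ mcoeffX; case: eqP; rewrite ?mulr1 ?mulr0.
rewrite sum_pick ?msupp_uniq //.
case: (boolP (e \in msupp f)) => he /=; first by [].
by move: he; rewrite mcoeff_msupp negbK => /eqP ->; case: (Q e).
Qed.

Lemma meval_restr Q (f : R) v :
  (restr Q f).@[v] = \sum_(c <- msupp f | Q c) f@_c * \prod_i v i ^+ c i.
Proof.
rewrite /restr raddf_sum; apply: eq_bigr => c _ /=; by rewrite mevalZ mevalX.
Qed.

Lemma msupp_restr Q (f : R) c : c \in msupp (restr Q f) -> Q c && (c \in msupp f).
Proof.
by rewrite !mcoeff_msupp mcoeff_restr; case: (Q c); rewrite ?eqxx.
Qed.

Lemma prod_zero (v : 'I_N -> k) (c : mon) i :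
  v i = 0 -> c i != 0%N -> \prod_j v j ^+ c j = 0.
Proof.
move=> hv hc; rewrite (bigD1 i) //= hv expr0n (negbTE hc) mul0r //.
Qed.

Lemma mono_conc (l : 'I_N) (c : mon) :
  (forall i, i != l -> c i = 0%N) -> c = (U_(l) *+ mdeg c)%MM.
Proof.
move=> h.
have ec : c = (U_(l) *+ c l)%MM.
  apply/mnmP => i; rewrite mulmnE mnm1E.
  case: (eqVneq l i) => [<-|hli]; first by rewrite mul1n.
  by rewrite mul0n h // eq_sym.
have -> : mdeg c = c l by rewrite {1}ec mdegMn mdeg1 mul1n.
exact: ec.
Qed.

Lemma hcomp_eval (l : 'I_N) (g : R) d u :
  (forall c, c \in msupp g -> forall i, i != l -> c i != 0%N -> u i = 0) ->
  (hcomp d g).@[u] = g@_(U_(l) *+ d) * u l ^+ d.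
Proof.
move=> h; rewrite hcompE meval_restr.
transitivity (\sum_(c <- msupp g | mdeg c == d)
   (if c == (U_(l) *+ d)%MM then g@_c * u l ^+ d else 0)).
  rewrite big_seq_cond [RHS]big_seq_cond; apply: eq_bigr => c /andP [hc /eqP hd].
  case: eqP => [->|hne].
    by rewrite -mevalX -mpolyXn rmorphXn /= mevalXU.
  case: (boolP [exists i, (i != l) && (c i != 0%N)]).
    move/existsP => [i /andP [hil hci]].
    by rewrite (prod_zero (i:=i)) ?mulr0 //; apply: (h c).
  rewrite negb_exists => /forallP hall; exfalso; apply: hne.
  rewrite -hd; apply: mono_conc => i hi.
  by move: (hall i); rewrite hi /= negbK => /eqP.
rewrite sum_pick ?msupp_uniq // mdegMn mdeg1 mul1n eqxx andbT.
case: (boolP (_ \in msupp g)) => //.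
by rewrite mcoeff_msupp negbK => /eqP ->; rewrite mul0r.
Qed.

Definition suppP (P : pred 'I_N) : pred mon :=
  fun c => [forall i, ~~ P i ==> (c i == 0%N)].

Lemma restr_ideal (W : ('I_N -> k) -> Prop) (P : pred 'I_N) (f : R) :
  (forall v, W v -> forall i, ~~ P i -> v i = 0) ->
  ideal_of W f -> ideal_of W (restr (suppP P) f).
Proof.
move=> hW hf d v hv.
have e : hcomp d (restr (suppP P) f) =
         restr (fun c => (mdeg c == d) && suppP P c) f.
  apply/mpolyP => e; rewrite hcompE !mcoeff_restr.
  by case: (mdeg e == d); case: (suppP P e).
rewrite e meval_restr.
have := hf d v hv; rewrite hcompE meval_restr (bigID (suppP P)) /=.
rewrite [X in _ + X]big1 ?addr0 //.
move=> c /andP [_ hc]; move: hc; rewrite /suppP negb_forall => /existsP [i].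
rewrite negb_imply => /andP [hPi hci].
by rewrite (prod_zero (i:=i)) ?mulr0 // hW.
Qed.

Lemma in_vars_restr (P : pred 'I_N) (f : R) : in_vars P (restr (suppP P) f).
Proof.
move=> c /msupp_restr /andP [/forallP hc _] i hi.
by move: (hc i); rewrite hi /= => /eqP.
Qed.

Lemma lead_restr lt (Q : pred mon) (f : R) b :
  is_lead lt f b -> Q b -> is_lead lt (restr Q f) b.
Proof.
case=> hb hlt hQ; split.
  by rewrite mcoeff_msupp mcoeff_restr hQ -mcoeff_msupp.
by move=> c /msupp_restr /andP [_ hc]; apply: hlt.
Qed.

Lemma lead_neq0 lt (f : R) b : is_lead lt f b -> f != 0.
Proof.
case=> hb _; apply: contraTneq hb => ->; by rewrite mcoeff_msupp mcoeff0 eqxx.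
Qed.

Lemma in_vars_X (P : pred 'I_N) (c : mon) :
  (forall i, ~~ P i -> c i = 0%N) -> in_vars P ('X_[c] : R).
Proof. by move=> h a; rewrite msuppX mem_seq1 => /eqP ->. Qed.

Lemma L1 lt (C J : R -> Prop) (a : mon) :
  initial_ideal_in lt C J 'X_[a] ->
  exists f b, [/\ J f, f != 0, is_lead lt f b & forall i, (b i <= a i)%N].
Proof.
case=> gs [hgs ha].
apply: NNPP => hno.
have : ('X_[a] : R)@_a = 0.
  rewrite ha raddf_sum big1_seq // => [[x y]] /= hin.
  have [_ [f [b [hJ hf0 hl hy]]]] := hgs _ hin; rewrite /= in hy; rewrite hy.
  apply/eqP; apply: contraT => hne; rewrite -mcoeff_msupp in hne.
  move: hne; rewrite (perm_mem (msuppMX x b)) => /mapP [m' _ ha'].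
  case: hno; exists f, b; split => // i; by rewrite ha' mnmDE leq_addr.
by rewrite mcoeffX eqxx => /eqP; rewrite oner_eq0.
Qed.

Lemma L2 lt (C J : R -> Prop) (f : R) b (a : mon) :
  J f -> is_lead lt f b -> (forall i, (b i <= a i)%N) -> C 'X_[a - b] ->
  initial_ideal_in lt C J 'X_[a].
Proof.
move=> hJ hl hba hC.
exists [:: ('X_[a - b], 'X_[b])]; split.
  move=> g; rewrite mem_seq1 => /eqP -> /=; split => //.
  by exists f, b; split => //; apply: lead_neq0 hl.
by rewrite big_seq1 /= -mpolyXD submK //; apply/mnm_lepP.
Qed.

Lemma ideal_of_mono (W : ('I_N -> k) -> Prop) (f : R) :
  (forall v, W v -> forall c, c \in msupp f -> \prod_i v i ^+ c i = 0) ->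
  ideal_of W f.
Proof.
move=> h d v hv; rewrite hcompE meval_restr big1_seq // => c /andP [_ hc].
by rewrite h // mulr0.
Qed.

End Aux.

Section Side.
Variables (k : fieldType) (N : nat).
Local Notation R := {mpoly k[N]}.
Local Notation mon := 'X_{1..N}.
Variables (lt : rel mon) (W1 W2 : ('I_N -> k) -> Prop) (P : pred 'I_N) (l : 'I_N)
  (p0 : 'I_N -> k).
Hypothesis hW1 : forall v, W1 v -> forall i, ~~ P i -> v i = 0.
Hypothesis hW2 : forall v, W2 v -> forall i, P i -> i != l -> v i = 0.
Hypothesis hp0 : W1 p0.
Hypothesis hp0c : forall i, i != l -> p0 i = 0.
Hypothesis hp0l : p0 l != 0.

Lemma coeff_conc (g : R) d : ideal_of W1 g ->
  (forall c, c \in msupp g -> forall i, i != l -> c i != 0%N -> p0 i = 0) ->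
  g@_(U_(l) *+ d) = 0.
Proof.
move=> hg hc; have := hg d p0 hp0; rewrite (hcomp_eval (l:=l)) //.
by move/eqP; rewrite mulf_eq0 (negbTE (expf_neq0 _ hp0l)) orbF => /eqP.
Qed.

Lemma side (JX : R -> Prop)
  (hJX : forall f, JX f <-> ideal_of W1 f /\ ideal_of W2 f) (a : mon)
  (ha : forall i, ~~ P i -> a i = 0%N) :
  initial_ideal_in lt (in_vars (fun _ => true)) JX 'X_[a] <->
  initial_ideal_in lt (in_vars P) (fun f => ideal_of W1 f /\ in_vars P f) 'X_[a].
Proof.
split.
  move/L1 => [f [b [hJ hf0 hl hba]]].
  have hbP : suppP P b.
    apply/forallP => i; apply/implyP => hi; apply/eqP.
    by move: (hba i); rewrite ha // leqn0 => /eqP.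
  apply: (L2 (f := restr (suppP P) f)) (lead_restr hl hbP) hba _.
    split; last exact: in_vars_restr.
    by apply: restr_ideal => //; case/hJX: hJ.
  by apply: in_vars_X => i hi; rewrite mnmBE ha.
move/L1 => [g [b [[hg hgv] hg0 hl hba]]].
apply: (L2 (f := g)) hl hba _; last by apply: in_vars_X.
apply/hJX; split => // d v hv.
rewrite (hcomp_eval (l:=l)).
  rewrite coeff_conc ?mul0r // => c _ i hi _; exact: hp0c.
move=> c hc i hil hci; apply: (hW2 hv) hil.
apply: contraT => hPi; by move: hci; rewrite (hgv c hc i hPi) eqxx.
Qed.

Lemma not_conc (C J : R -> Prop) m :
  (forall f, J f -> ideal_of W1 f) ->
  ~ initial_ideal_in lt C J 'X_[U_(l) *+ m].
Proof.
move=> hJ /L1 [f [b [hf hf0 [hb _] hba]]].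
have hb0 : forall i, i != l -> b i = 0%N.
  move=> i hi; move: (hba i); rewrite mulmnE mnm1E eq_sym (negbTE hi) mul0n.
  by rewrite leqn0 => /eqP.
have eb := mono_conc hb0.
have := coeff_conc (mdeg b) (hJ _ hf) (fun c _ i hi _ => hp0c hi).
by rewrite -eb => e; move: hb; rewrite mcoeff_msupp e eqxx.
Qed.

End Side.

Lemma mono_ideal (k : fieldType) (N : nat) (W : ('I_N -> k) -> Prop) (a : 'X_{1..N}) :
  (forall v, W v -> exists i, v i = 0 /\ a i != 0%N) -> ideal_of W ('X_[a] : {mpoly k[N]}).
Proof.
move=> h; apply: ideal_of_mono => v hv c; rewrite msuppX mem_seq1 => /eqP ->.
by have [i [hi hai]] := h v hv; apply: (prod_zero (i:=i)).
Qed.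

Lemma lead_X (k : fieldType) (N : nat) lt (a : 'X_{1..N}) :
  is_lead lt ('X_[a] : {mpoly k[N]}) a.
Proof.
split; first by rewrite msuppX mem_seq1.
by move=> b; rewrite msuppX mem_seq1 => ->.
Qed.

Theorem lemma3p3
  (k : closedFieldType) (char0 : [pchar k] =i pred0)
  (n : nat) (l : 'I_n.+1) (hl0 : (0 < l)%N) (hln : (l < n)%N)
  (Y Z : ('I_n.+1 -> k) -> Prop)
  (hY : proj_closed (k:=k) Y) (hZ : proj_closed (k:=k) Z)
  (hYsub : forall v, Y v -> forall i : 'I_n.+1, (i < l)%N -> v i = 0)
  (hZsub : forall v, Z v -> forall i : 'I_n.+1, (l < i)%N -> v i = 0)
  (hYZ : exists v, Y v /\ Z v)
  (lt : rel 'X_{1..n.+1}) (hlt : monomial_order lt)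
  (m : nat) (hm : (0 < m)%N) :
  let I_Y := ideal_of (k:=k) Y in
  let I_Z := ideal_of (k:=k) Z in
  let I_X := fun f => I_Y f /\ I_Z f in
  let SigmaX := Sigma lt (fun _ => true) I_X m in
  let SigmaY := Sigma lt (fun i : 'I_n.+1 => (l <= i)%N) I_Y m in
  let SigmaZ := Sigma lt (fun i : 'I_n.+1 => (i <= l)%N) I_Z m in
  (forall a, SigmaX a <-> SigmaY a \/ SigmaZ a) /\
  (forall a, SigmaY a /\ SigmaZ a <-> a = (U_(l) *+ m)%MM).
Proof.
move=> I_Y I_Z I_X SigmaX SigmaY SigmaZ.
have [p0 [hp0Y hp0Z]] := hYZ.
have hp0c : forall i, i != l -> p0 i = 0.
  move=> i hi; case: (ltngtP i l) => h.
  - exact: hYsub.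
  - exact: hZsub.
  - by move: hi; rewrite (val_inj h) eqxx.
have hp0l : p0 l != 0.
  have [S [_ hS]] := hY; have [[i hi] _] := (hS p0).1 hp0Y.
  by case: (eqVneq i l) => [<-//|hil]; move: hi; rewrite hp0c ?eqxx.
set PY := fun i : 'I_n.+1 => (l <= i)%N.
set PZ := fun i : 'I_n.+1 => (i <= l)%N.
set JX := fun f => I_X f /\ in_vars (fun _ => true) f.
have hY1 : forall v, Y v -> forall i, ~~ PY i -> v i = 0.
  by move=> v hv i; rewrite /PY -ltnNge; apply: hYsub.
have hZ1 : forall v, Z v -> forall i, ~~ PZ i -> v i = 0.
  by move=> v hv i; rewrite /PZ -ltnNge; apply: hZsub.
have hY2 : forall v, Y v -> forall i, PZ i -> i != l -> v i = 0.
  move=> v hv i; rewrite /PZ leq_eqVlt => /orP [/eqP h|h] hi.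
    by move: hi; rewrite (val_inj h) eqxx.
  exact: hYsub.
have hZ2 : forall v, Z v -> forall i, PY i -> i != l -> v i = 0.
  move=> v hv i; rewrite /PY leq_eqVlt => /orP [/eqP h|h] hi.
    by move: hi; rewrite -(val_inj h) eqxx.
  exact: hZsub.
have CY := side lt hY1 hZ2 hp0Y hp0c hp0l (JX := JX).
have CZ := side lt hZ1 hY2 hp0Z hp0c hp0l (JX := JX).
have hJY : forall f, JX f <-> ideal_of Y f /\ ideal_of Z f.
  by move=> f; split; [case | move=> h; split].
have hJZ : forall f, JX f <-> ideal_of Z f /\ ideal_of Y f.
  by move=> f; split; [case=> [[h1 h2] _] | move=> [h1 h2]; split].
have {CY}CY := CY hJY; have {CZ}CZ := CZ hJZ.
have NY := not_conc (lt:=lt) (C := in_vars PY) (J := fun f => I_Y f /\ in_vars PY f) (m := m) hp0Y hp0c hp0l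
  (fun f h => h.1).
have NZ := not_conc (lt:=lt) (C := in_vars PZ) (J := fun f => I_Z f /\ in_vars PZ f) (m := m) hp0Z hp0c hp0l
  (fun f h => h.1).
have NX : forall (a : 'X_{1..n.+1}) (i j : 'I_n.+1), (i < l)%N -> a i != 0%N -> (l < j)%N -> a j != 0%N ->
    initial_ideal_in lt (in_vars (fun _ => true)) JX 'X_[a].
  move=> a i j hi hai hj haj.
  apply: (@L2 _ _ lt _ JX 'X_[a] a a _ (@lead_X _ _ lt a)); last by apply: in_vars_X.
    split; last by move=> c _ ? /=.
    split; apply: mono_ideal => v hv.
      by exists i; split => //; apply: hYsub.
    by exists j; split => //; apply: hZsub.
  by move=> i'.
split.
  move=> a; split.
    case=> [hdeg _ hnX].
    case: (boolP [exists i, ((i : 'I_n.+1) < l)%N && (a i != 0%N)]) => [/existsP [i /andP [hi hai]] | hYn].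
      case: (boolP [exists j, (l < (j : 'I_n.+1))%N && (a j != 0%N)]) => [/existsP [j /andP [hj haj]] | hZn].
        by case: hnX; apply: (NX a i j).
      have hsz : forall i, ~~ PZ i -> a i = 0%N.
        move=> i' hi'; move: hZn; rewrite negb_exists => /forallP /(_ i').
        by rewrite /PZ -ltnNge in hi'; rewrite hi' /= negbK => /eqP.
      right; split => // h; apply: hnX; exact: (proj2 (CZ a hsz) h).
    have hsy : forall i, ~~ PY i -> a i = 0%N.
      move=> i' hi'; move: hYn; rewrite negb_exists => /forallP /(_ i').
      by rewrite /PY -ltnNge in hi'; rewrite hi' /= negbK => /eqP.
    left; split => // h; apply: hnX; exact: (proj2 (CY a hsy) h).
  case=> [[hdeg hs hn] | [hdeg hs hn]]; split => //; move=> h.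
    by apply: hn; apply: (proj1 (CY a hs)).
  by apply: hn; apply: (proj1 (CZ a hs)).
move=> a; split.
  case=> [[hd hsy _] [_ hsz _]].
  rewrite (mono_conc (l := l) (c := a)) ?hd // => i hi.
  case: (ltngtP i l) => h.
  - by apply: hsy; rewrite -ltnNge.
  - by apply: hsz; rewrite -ltnNge.
  - by move: hi; rewrite (val_inj h) eqxx.
move=> ->.
have hdm : mdeg (U_(l) *+ m)%MM = m by rewrite mdegMn mdeg1 mul1n.
split; split => //.
- move=> i hi; rewrite mulmnE mnm1E.
  case: (eqVneq l i) => [h|]; last by rewrite mul0n.
  by move: hi; rewrite h leqnn.
- move=> i hi; rewrite mulmnE mnm1E.
  case: (eqVneq l i) => [h|]; last by rewrite mul0n.
  by move: hi; rewrite h leqnn.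
Qed.
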